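(* Let $\mathcal{U}$ be a subspace of $\mathbb{R}^n$. The following are equivalent: (1) $\mathcal{U}$ is recoverable by MTFA; (2) $\mathcal{U}$ is realizable; (3) $\mathcal{U}^\perp$ has the ellipsoid fitting property.
   Context: Minimum trace factor analysis (MTFA) with input a symmetric $n\times n$ matrix $X$ is the semidefinite program: minimize $\operatorname{tr}(L)$ over pairs $(D,L)$ of $n\times n$ symmetric matrices subject to $X=D+L$, $L$ positive semidefinite, $D$ diagonal. A subspace $\mathcal{U}\subseteq\mathbb{R}^n$ is recoverable by MTFA if for every diagonal $D^\star$ and every positive semidefinite $L^\star$ with column space equal to $\mathcal{U}$, the pair $(D^\star,L^\star)$ is the unique optimal solution of MTFA with input $X=D^\star+L^\star$. A correlation matrix is a positive semidefinite matrix with all diagonal entries equal to $1$. A subspace $\mathcal{U}\subseteq\mathbb{R}^n$ is realizable if there is an $n\times n$ correlation matrix $Q$ whose nullspace contains $\mathcal{U}$. A centered ellipsoid in $\mathbb{R}^k$ is described by a symmetric positive semidefinite $k\times k$ matrix $M$, and it passes through $v\in\mathbb{R}^k$ if $v^TMv=1$. A subspace $\mathcal{V}\subseteq\mathbb{R}^n$ has the ellipsoid fitting property if there is a $k\times n$ matrix $V$ (for some $k$) with row space $\mathcal{V}$ and a centered ellipsoid in $\mathbb{R}^k$ passing through every column of $V$. *)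

(* Defs.v *)
From mathcomp Require Import all_boot all_order all_algebra.
From mathcomp Require Import reals.
Set Implicit Arguments. Unset Strict Implicit. Unset Printing Implicit Defensive.
Import Order.TTheory GRing.Theory Num.Theory.
Local Open Scope ring_scope.

Section Defs.
Variable R : realType.

(* Subspaces of R^n are represented (as in mxalgebra) by the row space of a
   matrix U : 'M[R]_(m, n); vectors of R^n are rows/columns as convenient. *)

Definition symmetricmx (n : nat) (A : 'M[R]_n) : Prop := A^T = A.

Definition psdmx (n : nat) (A : 'M[R]_n) : Prop :=
  symmetricmx A /\ forall x : 'cV[R]_n, 0 <= (x^T *m A *m x) 0 0.

Definition mtfa_feasible (n : nat) (X D L : 'M[R]_n) : Prop :=
  symmetricmx D /\ symmetricmx L /\ X = D + L /\ psdmx L /\ is_diag_mx D.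

Definition mtfa_optimal (n : nat) (X D L : 'M[R]_n) : Prop :=
  mtfa_feasible X D L /\
  forall D' L' : 'M[R]_n, mtfa_feasible X D' L' -> \tr L <= \tr L'.

Definition mtfa_unique_optimal (n : nat) (X D L : 'M[R]_n) : Prop :=
  mtfa_optimal X D L /\
  forall D' L' : 'M[R]_n, mtfa_optimal X D' L' -> D' = D /\ L' = L.

(* column space of L equals the row space of U: colspace L = rowspace L^T *)
Definition recoverable (m n : nat) (U : 'M[R]_(m, n)) : Prop :=
  forall Dstar Lstar : 'M[R]_n,
    is_diag_mx Dstar -> psdmx Lstar -> (Lstar^T == U)%MS ->
    mtfa_unique_optimal (Dstar + Lstar) Dstar Lstar.

Definition correlationmx (n : nat) (Q : 'M[R]_n) : Prop :=
  psdmx Q /\ forall i, Q i i = 1.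

(* nullspace of Q contains U: Q u = 0 for every u in U, i.e. Q *m U^T = 0 *)
Definition realizable (m n : nat) (U : 'M[R]_(m, n)) : Prop :=
  exists Q : 'M[R]_n, correlationmx Q /\ Q *m U^T = 0.

(* centered ellipsoid {v | v^T M v = 1}, M psd, passes through v *)
Definition ellipsoid_passes (k : nat) (M : 'M[R]_k) (v : 'cV[R]_k) : Prop :=
  (v^T *m M *m v) 0 0 = 1.

Definition ellipsoid_fitting (p n : nat) (V : 'M[R]_(p, n)) : Prop :=
  exists (k : nat) (W : 'M[R]_(k, n)) (M : 'M[R]_k),
    (W == V)%MS /\ psdmx M /\ forall j : 'I_n, ellipsoid_passes M (col j W).

Definition orth_compl (m n : nat) (U : 'M[R]_(m, n)) : 'M[R]_n := kermx U^T.

End Defs.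

(* Main.v *)
Require Import Defs.
From mathcomp Require Import all_boot all_order all_algebra.
From mathcomp Require Import reals.
From mathcomp Require Import ring lra.
From mathcomp Require Import all_classical all_analysis.
Set Implicit Arguments. Unset Strict Implicit. Unset Printing Implicit Defensive.
Import Order.TTheory GRing.Theory Num.Theory.
Import numFieldNormedType.Exports.
Local Open Scope ring_scope.

Section Alg.
Variable R : realType.

Definition qf n (A : 'M[R]_n) (x : 'cV[R]_n) : R := (x^T *m A *m x) 0 0.

Lemma qfE n (A : 'M[R]_n) x :
  qf A x = \sum_i \sum_j x i 0 * A i j * x j 0.
Proof.
rewrite /qf mxE (eq_bigr (fun j => \sum_i x i 0 * A i j * x j 0)).
  by rewrite exchange_big.
by move=> j _; rewrite mxE big_distrl /=; apply: eq_bigr => i _; rewrite !mxE.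
Qed.

Lemma qfD n (A B : 'M[R]_n) x : qf (A + B) x = qf A x + qf B x.
Proof. by rewrite /qf mulmxDr mulmxDl mxE. Qed.

Lemma qfZ n (a : R) (A : 'M[R]_n) x : qf (a *: A) x = a * qf A x.
Proof. by rewrite /qf -scalemxAr -scalemxAl mxE. Qed.

Lemma qfN n (A : 'M[R]_n) x : qf (- A) x = - qf A x.
Proof. by rewrite -scaleN1r qfZ mulN1r. Qed.

Lemma qf_diag n (d : 'rV[R]_n) x : qf (diag_mx d) x = \sum_i d 0 i * x i 0 ^+ 2.
Proof.
rewrite qfE; apply: eq_bigr => i _.
rewrite (bigD1 i) //= big1 ?addr0; first by rewrite !mxE eqxx mulr1n; ring.
by move=> j /negbTE ji; rewrite !mxE eq_sym ji mulr0n mulr0 mul0r.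
Qed.

Lemma qf_sq n p (C : 'M[R]_(p, n)) x : qf (C^T *m C) x = \sum_i (C *m x) i 0 ^+ 2.
Proof.
rewrite /qf mulmxA -(trmx_mul C x) -mulmxA mxE; apply: eq_bigr => i _.
by rewrite mxE expr2.
Qed.

Lemma bilin n (A : 'M[R]_n) (a b : 'cV[R]_n) :
  (a^T *m A *m b) 0 0 = \sum_i \sum_j a i 0 * A i j * b j 0.
Proof.
rewrite mxE (eq_bigr (fun j => \sum_i a i 0 * A i j * b j 0)).
  by rewrite exchange_big.
by move=> j _; rewrite mxE big_distrl /=; apply: eq_bigr => i _; rewrite !mxE.
Qed.

Lemma qf_add n (A : 'M[R]_n) (a b : 'cV[R]_n) (s : R) : A^T = A ->
  qf A (a + s *: b) = qf A a + s *+ 2 * (b^T *m A *m a) 0 0 + s ^+ 2 * qf A b.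
Proof.
move=> sA.
have sym : forall i j, A i j = A j i.
  by move=> i j; have := congr1 (fun M : 'M[R]_n => M j i) sA; rewrite mxE.
have e : \sum_i \sum_j b i 0 * A i j * a j 0 = \sum_i \sum_j a i 0 * A i j * b j 0.
  rewrite exchange_big; apply: eq_bigr => i _; apply: eq_bigr => j _.
  by rewrite sym; ring.
rewrite !qfE bilin.
set X := \sum_i \sum_j b i 0 * A i j * a j 0.
have -> : s *+ 2 * X = s * X + s * \sum_i \sum_j a i 0 * A i j * b j 0.
  by rewrite -e mulr2n mulrDl.
rewrite /X !mulr_sumr -!big_split /=; apply: eq_bigr => i _.
rewrite !mulr_sumr -!big_split /=; apply: eq_bigr => j _; rewrite !mxE; ring.
Qed.


Definition ev n (j : 'I_n) : 'cV[R]_n := delta_mx j 0.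

Lemma eTM n p (M : 'M[R]_(n, p)) j k : ((ev j)^T *m M) 0 k = M j k.
Proof. by rewrite /ev trmx_delta -rowE mxE. Qed.

Lemma qf_e n (A : 'M[R]_n) j : qf A (ev j) = A j j.
Proof. by rewrite /qf /ev -colE mxE eTM. Qed.

Lemma psd_sym n (A : 'M[R]_n) : psdmx A -> A^T = A.
Proof. by case. Qed.

Lemma psd_ge0 n (A : 'M[R]_n) x : psdmx A -> 0 <= qf A x.
Proof. by case=> _ /(_ x). Qed.

Lemma psd_diag n (A : 'M[R]_n) j : psdmx A -> 0 <= A j j.
Proof. by move=> pA; rewrite -qf_e; apply: psd_ge0. Qed.

Lemma psd_zero n (A : 'M[R]_n) c : psdmx A -> qf A c = 0 -> A *m c = 0.
Proof.
move=> pA qc; apply/matrixP => j k; rewrite (ord1 k) [RHS]mxE.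
set b := (A *m c) j 0.
have eb : ((ev j)^T *m A *m c) 0 0 = b by rewrite -mulmxA eTM.
have h := psd_ge0 (c + (- b / (A j j + 1)) *: ev j) pA.
rewrite qf_add ?psd_sym // qc eb qf_e in h.
have a0 := psd_diag j pA.
have a1 : 0 < A j j + 1 by lra.
set t := A j j + 1 in a1 h.
have ht : A j j = t - 1 by rewrite /t; ring.
rewrite ht in h.
have : 0 <= - b ^+ 2 * (t + 1) / t ^+ 2.
  apply: le_trans h _; rewrite le_eqVlt; apply/orP; left; apply/eqP.
  by field; rewrite gt_eqF.
rewrite pmulr_lge0 ?invr_gt0 ?exprn_gt0 // => h2.
have : 0 <= b ^+ 2 by rewrite sqr_ge0.
move=> h3; nra.
Qed.


Lemma qf_rank1 n (a x : 'cV[R]_n) : qf (a *m a^T) x = ((a^T *m x) 0 0) ^+ 2.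
Proof.
by have := qf_sq a^T x; rewrite trmxK big_ord1.
Qed.

Lemma psd_decomp n (A : 'M[R]_n) : psdmx A ->
  exists s : seq 'cV[R]_n, A = \sum_(c <- s) c *m c^T.
Proof.
have [k] := ubnP #|[set i | A i i != 0]|.
elim: k A => // k IH A; rewrite ltnS => hk pA.
case: (pickP (fun i => A i i != 0)) => [i /= Aii0|all0]; last first.
  exists [::]; rewrite big_nil; apply/matrixP => p q.
  have : A *m ev q = 0.
    by apply: psd_zero => //; rewrite qf_e; apply/eqP; move/negbT: (all0 q); rewrite negbK.
  by rewrite /ev -colE => /matrixP /(_ p 0); rewrite !mxE.
have sA := psd_sym pA.
have sym : forall p q, A p q = A q p.
  by move=> p q; have := congr1 (fun M : 'M[R]_n => M q p) sA; rewrite mxE.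
have Aii : 0 < A i i by rewrite lt_def Aii0 psd_diag.
set a := col i A.
set A' := A - (A i i)^-1 *: (a *m a^T).
have aTx : forall x : 'cV[R]_n, (a^T *m x) 0 0 = ((ev i)^T *m A *m x) 0 0.
  move=> x; rewrite !mxE; apply: eq_bigr => l _; rewrite eTM !mxE sym.
  by [].
have pA' : psdmx A'.
  split.
    rewrite /Defs.symmetricmx raddfB /= linearZ /= trmx_mul trmxK sA.
    by [].
  move=> x; rewrite -/(qf A' x) /A' qfD qfN qfZ qf_rank1 aTx.
  set b := ((ev i)^T *m A *m x) 0 0.
  have h := psd_ge0 (x + (- b / A i i) *: ev i) pA.
  rewrite qf_add // qf_e in h.
  rewrite -/b in h.
  have -> : qf A x - (A i i)^-1 * b ^+ 2 =
      qf A x + (- b / A i i) *+ 2 * b + (- b / A i i) ^+ 2 * A i i.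
    by field; rewrite gt_eqF.
  exact: h.
have dA' : forall j, A' j j = A j j - (A i i)^-1 * (A j i) ^+ 2.
  by move=> j; rewrite /A' !mxE big_ord1 !mxE expr2.
have sub : (#|[set j | A' j j != 0%R]| < #|[set j | A j j != 0%R]|)%N.
  rewrite (cardsD1 i [set j | A j j != 0]) inE Aii0 add1n ltnS.
  apply: subset_leq_card; apply/fintype.subsetP => j; rewrite !inE => hj.
  have h0 := psd_diag j pA'.
  have h1 := psd_diag j pA.
  apply/andP; split.
    apply: contraNneq hj => ->.
    rewrite dA'; apply/eqP; field; rewrite gt_eqF //.
  apply: contraNneq hj => hj0; rewrite dA' hj0 in h0 *.
  have h2 : 0 <= (A i i)^-1 * A j i ^+ 2 by apply: mulr_ge0; [rewrite invr_ge0 ltW | rewrite sqr_ge0].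
  by apply/eqP; lra.
have [s Hs] := IH A' (leq_trans sub hk) pA'.
exists ((Num.sqrt (A i i))^-1 *: a :: s); rewrite big_cons -Hs /A'.
rewrite linearZ /= -scalemxAl -scalemxAr scalerA.
have sq := sqr_sqrtr (ltW Aii).
have sp : 0 < Num.sqrt (A i i) by rewrite sqrtr_gt0.
have -> : (Num.sqrt (A i i))^-1 * (Num.sqrt (A i i))^-1 = (A i i)^-1.
  by rewrite -invfM -expr2 sq.
by rewrite addrC subrK.
Qed.

Lemma tr_decomp n (Q : 'M[R]_n) (s : seq 'cV[R]_n) :
  \tr (Q *m \sum_(c <- s) c *m c^T) = \sum_(c <- s) qf Q c.
Proof.
rewrite mulmx_sumr raddf_sum /=; apply: eq_bigr => c _.
by rewrite mulmxA mxtrace_mulC trace_mx11 /qf mulmxA.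
Qed.


Lemma diag_sym n (D : 'M[R]_n) : is_diag_mx D -> D^T = D.
Proof. by move=> /diag_mxP [d ->]; rewrite tr_diag_mx. Qed.

Lemma mul_diag_entry n (Q D : 'M[R]_n) i : is_diag_mx D ->
  (Q *m D) i i = Q i i * D i i.
Proof.
move=> /is_diag_mxP dD; rewrite mxE (bigD1 i) //= big1 ?addr0 //.
by move=> k ki; rewrite dD ?mulr0 //.
Qed.

Lemma trace_ineq n (Q L0 L : 'M[R]_n) : correlationmx Q -> Q *m L0 = 0 ->
  psdmx L -> is_diag_mx (L - L0) ->
  \tr L0 <= \tr L /\ (\tr L <= \tr L0 -> L = L0).
Proof.
move=> [pQ dQ] QL0 pL dD.
set D := L - L0.
have trD : \tr D = \tr (Q *m L).
  have -> : Q *m L = Q *m D by rewrite /D mulmxBr QL0 subr0.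
  by apply: eq_bigr => i _; rewrite mul_diag_entry // dQ mul1r.
have [s Hs] := psd_decomp pL.
have tQL : \tr (Q *m L) = \sum_(c <- s) qf Q c by rewrite Hs tr_decomp.
have ge : 0 <= \tr (Q *m L) by rewrite tQL sumr_ge0 // => c _; apply: psd_ge0.
have trD' : \tr D = \tr L - \tr L0 by rewrite /D raddfB.
split; first by rewrite -subr_ge0 -trD' trD.
move=> le.
have z : \tr (Q *m L) = 0 by apply/eqP; rewrite eq_le ge andbT -trD trD'; lra.
have QL : Q *m L = 0.
  move: z; rewrite tQL => /eqP; rewrite psumr_eq0; last by move=> c _; apply: psd_ge0.
  move=> /allP hall; rewrite Hs mulmx_sumr big_seq big1 // => c cs.
  by rewrite mulmxA psd_zero ?mul0mx //; apply/eqP; exact: (hall c cs).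
have QD : Q *m D = 0 by rewrite /D mulmxBr QL QL0 subr0.
apply/eqP; rewrite -subr_eq0 -/D; apply/eqP/matrixP => i j.
case: (eqVneq i j) => [<-|ij].
  by have := congr1 (fun M : 'M[R]_n => M i i) QD; rewrite mul_diag_entry // dQ mul1r !mxE.
by rewrite ((is_diag_mxP dD) i j ij) mxE.
Qed.

Lemma real_recov m n (U : 'M[R]_(m, n)) : realizable U -> recoverable U.
Proof.
move=> [Q [cQ QU]] Ds Ls dDs pLs eqL.
have QL : Q *m Ls = 0.
  have /submxP [Y hY] : (Ls^T <= U)%MS by case/andP: eqL.
  by rewrite -(trmxK Ls) hY trmx_mul mulmxA QU mul0mx.
have key : forall D' L', mtfa_feasible (Ds + Ls) D' L' ->
    \tr Ls <= \tr L' /\ (\tr L' <= \tr Ls -> L' = Ls).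
  move=> D' L' [_ [_ [eX [pL' dD']]]].
  apply: (trace_ineq cQ QL pL').
  have -> : L' - Ls = Ds - D'.
    by apply/eqP; rewrite subr_eq -addrA (addrC _ Ls) addrA eX [D' + L']addrC addrK.
  apply/is_diag_mxP => i j ij; rewrite !mxE.
  by move/is_diag_mxP: dDs => -> //; move/is_diag_mxP: dD' => -> //; rewrite subr0.
have feas : mtfa_feasible (Ds + Ls) Ds Ls.
  by split; [exact: diag_sym | split; [exact: psd_sym | split]].
have opt : mtfa_optimal (Ds + Ls) Ds Ls.
  by split => // D' L' /key [].
split => // D' L' [fe op].
have [_ h] := key _ _ fe.
have eL := h (op _ _ feas).
split => //.
move: fe => [_ [_ [eX _]]].
by apply: (addIr L'); rewrite -eX eL.
Qed.


Lemma qf_conj n k (C : 'M[R]_(k, n)) (M : 'M[R]_k) x :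
  qf (C^T *m M *m C) x = qf M (C *m x).
Proof. by rewrite /qf trmx_mul !mulmxA. Qed.

Lemma psd_conj n k (C : 'M[R]_(k, n)) (M : 'M[R]_k) :
  psdmx M -> psdmx (C^T *m M *m C).
Proof.
move=> pM; split.
  by rewrite /Defs.symmetricmx !trmx_mul trmxK (psd_sym pM) mulmxA.
by move=> x; rewrite -/(qf _ x) qf_conj; apply: psd_ge0.
Qed.

Lemma col_qf n k (W : 'M[R]_(k, n)) (M : 'M[R]_k) j :
  ((col j W)^T *m M *m col j W) 0 0 = (W^T *m M *m W) j j.
Proof.
by rewrite -/(qf M _) colE -qf_conj qf_e.
Qed.

Lemma real_ell m n (U : 'M[R]_(m, n)) :
  realizable U -> ellipsoid_fitting (orth_compl U).
Proof.
move=> [Q [[pQ dQ] QU]].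
set W := orth_compl U.
set Z := pinvmx W.
exists n, W, (Z^T *m Q *m Z); split; first by apply/andP; split; apply: submx_refl.
split; first exact: psd_conj.
move=> j; rewrite /ellipsoid_passes col_qf.
have QW : (Q <= W)%MS by apply/sub_kermxP.
have e1 : Q *m Z *m W = Q by apply: mulmxKpV.
clearbody Z W.
have e2 : W^T *m Z^T *m Q = Q.
  by have := congr1 trmx e1; rewrite !trmx_mul (psd_sym pQ) mulmxA.
by rewrite !mulmxA e2 e1 dQ.
Qed.

Lemma ell_real m n (U : 'M[R]_(m, n)) :
  ellipsoid_fitting (orth_compl U) -> realizable U.
Proof.
move=> [k [W [M [eqW [pM hcol]]]]].
exists (W^T *m M *m W); split.
  split; first exact: psd_conj.
  by move=> i; have := hcol i; rewrite /ellipsoid_passes col_qf.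
have : (W <= orth_compl U)%MS by case/andP: eqW.
by move/sub_kermxP => WU; rewrite -mulmxA WU mulmx0.
Qed.


Lemma sumsq_eq0 n (v : 'rV[R]_n) : (v *m v^T) 0 0 = 0 -> v = 0.
Proof.
rewrite mxE => h; apply/matrixP => i j; rewrite (ord1 i) [RHS]mxE.
have h2 : v 0 j ^+ 2 = 0.
  apply: (@psumr_eq0P _ _ predT (fun k => v 0 k ^+ 2)) => //.
    by move=> k _; exact: sqr_ge0.
  by rewrite -[RHS]h; apply: eq_bigr => l _; rewrite mxE expr2.
by move/eqP: h2; rewrite sqrf_eq0 => /eqP.
Qed.

Lemma proj_exists m n (U : 'M[R]_(m, n)) :
  exists P : 'M[R]_n, [/\ P^T = P, P *m P = P & (P == U)%MS].
Proof.
set B := row_base U.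
set G := B *m B^T.
have Gu : G \in unitmx.
  rewrite -row_free_unit -kermx_eq0; apply/eqP/row_matrixP => i.
  rewrite linear0.
  have h : row i (kermx G) *m G = 0 by rewrite -row_mul mulmx_ker linear0.
  apply/eqP; rewrite -(mulmx_free_eq0 _ (row_base_free U)) -/B; apply/eqP.
  apply: sumsq_eq0; rewrite trmx_mul mulmxA -(mulmxA _ B) -/G h mul0mx mxE //.
have GT : G^T = G by rewrite /G trmx_mul trmxK.
have BP : B *m (B^T *m invmx G *m B) = B by rewrite !mulmxA -/G mulmxV // mul1mx.
have eB : (B :=: U)%MS by apply: eq_row_base.
clearbody G B.
exists (B^T *m invmx G *m B); split=> //.
- by rewrite !trmx_mul trmxK trmx_inv GT mulmxA.
- by move: (congr1 (mulmx (B^T *m invmx G)) BP); rewrite !mulmxA.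
- have e1 : (B^T *m invmx G *m B <= B)%MS by apply: submxMl.
  have e2 : (B <= B^T *m invmx G *m B)%MS.
    by rewrite -{1}BP; exact: submxMl.
  apply/andP; split; by rewrite -eB ?e1 ?e2.
Qed.


Definition Hcond n (P : 'M[R]_n) : Prop :=
  forall d : 'rV[R]_n,
    (forall z : 'cV[R]_n, P *m z = 0 -> 0 <= \sum_i d 0 i * z i 0 ^+ 2) ->
    0 <= \sum_i d 0 i.

Lemma term_ge0 (t d e y z : R) : 0 < e -> d ^+ 2 / e + d ^+ 2 + 1 <= t ->
  0 <= t * y ^+ 2 + d * y ^+ 2 + 2 * d * y * z + e * y ^+ 2 + e * z ^+ 2.
Proof.
move=> e0 ht.
have h1 : d ^+ 2 + e * (d ^+ 2 + 1) <= e * t.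
  have := ler_wpM2l (ltW e0) ht.
  have -> : e * (d ^+ 2 / e + d ^+ 2 + 1) = d ^+ 2 + e * (d ^+ 2 + 1).
    by field; rewrite gt_eqF.
  by [].
have h2 : 0 <= d ^+ 2 + d + 1 by nra.
have h3 : d ^+ 2 <= e * (t + d + e) by nra.
have h4 : 0 <= e * (t * y ^+ 2 + d * y ^+ 2 + 2 * d * y * z + e * y ^+ 2 + e * z ^+ 2).
  have : 0 <= (d * y + e * z) ^+ 2 by apply: sqr_ge0.
  have : d ^+ 2 * y ^+ 2 <= e * (t + d + e) * y ^+ 2 by rewrite ler_wpM2r ?sqr_ge0.
  nra.
by rewrite pmulr_rge0 in h4.
Qed.

Lemma psd_proj n (P : 'M[R]_n) : P^T = P -> P *m P = P -> psdmx P.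
Proof.
move=> sP iP; split => // x.
have -> : P = P^T *m P by rewrite sP iP.
rewrite -/(qf _ x) qf_sq; apply: sumr_ge0 => i _; exact: sqr_ge0.
Qed.

Lemma recov_H m n (U : 'M[R]_(m, n)) (P : 'M[R]_n) :
  P^T = P -> P *m P = P -> (P == U)%MS -> recoverable U -> Hcond P.
Proof.
move=> sP iP eP rec d hd.
rewrite leNgt; apply/negP => hneg.
have n0 : (0 < n)%N.
  by case: n P U sP iP eP rec d hd hneg => // P U sP iP eP rec d hd; rewrite big_ord0 ltxx.
set S := \sum_i d 0 i in hneg.
have nR : 0 < n%:R :> R by rewrite ltr0n.
set e := - S / (2 * n%:R).
have e0 : 0 < e by rewrite /e divr_gt0 ?mulr_gt0 //; lra.
set t := \sum_i (d 0 i ^+ 2 / e + d 0 i ^+ 2 + 1).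
have ht : forall i, d 0 i ^+ 2 / e + d 0 i ^+ 2 + 1 <= t.
  move=> i; rewrite /t (bigD1 i) //= lerDl; apply: sumr_ge0 => k _.
  by rewrite addr_ge0 ?ler01 // addr_ge0 ?sqr_ge0 // divr_ge0 ?sqr_ge0 ?ltW.
have t0 : 0 < t by apply: lt_le_trans (ht (Ordinal n0)); rewrite ltr_wpDl ?ltr01 // addr_ge0 ?sqr_ge0 // divr_ge0 ?sqr_ge0 ?ltW.
set ev := d + e *: const_mx 1.
set L := t *: P + diag_mx ev.
set D := - diag_mx ev.
have pP := psd_proj sP iP.
have pL : psdmx (t *: P).
  split; first by rewrite /Defs.symmetricmx linearZ /= sP.
  by move=> x; rewrite -/(qf _ x) qfZ; apply: mulr_ge0; [exact: ltW | exact: psd_ge0].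
have eL : ((t *: P)^T == U)%MS.
  rewrite linearZ /= sP; apply/eqmxP; apply: eqmx_trans (eqmx_scale _ _) _.
    by rewrite gt_eqF.
  by apply/eqmxP.
have [[_ opt] _] := rec 0 (t *: P) (mx0_is_diag _ _ _) pL eL.
have feas : mtfa_feasible (0 + t *: P) D L.
  split; first by rewrite /Defs.symmetricmx /D raddfN /= tr_diag_mx.
  split; first by rewrite /Defs.symmetricmx /L linearD /= linearZ /= sP tr_diag_mx.
  split; first by rewrite /D /L add0r addrCA addNr addr0.
  split; last by rewrite /D -raddfN /=; apply: diag_mx_is_diag.
  split; first by rewrite /Defs.symmetricmx /L linearD /= linearZ /= sP tr_diag_mx.
  move=> x; rewrite -/(qf _ x) /L qfD qfZ qf_diag.
  set y := P *m x.
  set z := x - y.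
  have xyz : forall i, x i 0 = y i 0 + z i 0 by move=> i; rewrite /z !mxE; ring.
  have hz : P *m z = 0 by rewrite /z /y mulmxBr mulmxA iP subrr.
  have hyz : \sum_i y i 0 * z i 0 = 0.
    have : y^T *m z = 0.
      by rewrite /z /y trmx_mul sP mulmxBr -!mulmxA (mulmxA P P) iP subrr.
    move/matrixP => /(_ 0 0); rewrite !mxE => h; rewrite -[RHS]h.
    by apply: eq_bigr => i _; rewrite [y^T _ _]mxE.
  have hqP : qf P x = \sum_i y i 0 ^+ 2.
    have -> : P = P^T *m P by rewrite sP iP.
    by rewrite qf_sq.
  have hdz := hd z hz.
  rewrite hqP mulr_sumr.
  have -> : \sum_i t * y i 0 ^+ 2 + \sum_i ev 0 i * x i 0 ^+ 2 =
     \sum_i (t * y i 0 ^+ 2 + d 0 i * y i 0 ^+ 2 + 2 * d 0 i * y i 0 * z i 0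
             + e * y i 0 ^+ 2 + e * z i 0 ^+ 2)
     + \sum_i d 0 i * z i 0 ^+ 2 + (2 * e) * \sum_i y i 0 * z i 0.
    rewrite mulr_sumr -!big_split /=; apply: eq_bigr => i _.
    rewrite xyz /ev !mxE; ring.
  rewrite hyz mulr0 addr0 addr_ge0 // sumr_ge0 // => i _.
  exact: term_ge0.
have := opt D L feas.
rewrite /L mxtraceD lerDl mxtrace_diag.
have -> : \sum_j ev 0 j = S + n%:R * e.
  rewrite /ev /S /=.
  under eq_bigr do rewrite !mxE mulr1.
  by rewrite big_split /= sumr_const card_ord mulr_natl.
rewrite /e; have -> : n%:R * (- S / (2 * n%:R)) = - S / 2.
  by field; rewrite gt_eqF.
lra.
Qed.

End Alg.

Local Open Scope classical_set_scope.
Local Open Scope ring_scope.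

Section Sep.
Variable R : realType.

Lemma cont_sum {T : topologicalType} (I : Type) (r : seq I) (F : I -> T -> R) :
  (forall i, continuous (F i)) -> continuous (fun x => \sum_(i <- r) F i x).
Proof.
move=> hF; elim: r => [|a r IH].
  by under eq_fun do rewrite big_nil; exact: cst_continuous.
under eq_fun do rewrite big_cons.
by move=> x; apply: continuousD; [exact: hF | exact: IH].
Qed.

Lemma cont_coord n (i j : 'I_n) :
  continuous (fun v : 'rV[R]_(n * n) => vec_mx v i j).
Proof.
under eq_fun do rewrite mxE.
exact: coord_continuous.
Qed.


Definition Cm n (P Q : 'M[R]_n) : Prop :=
  psdmx Q /\ Q *m P = 0 /\ \tr Q = n%:R.

Lemma Cm_conv n (P Q0 Q : 'M[R]_n) (s : R) : 0 <= s <= 1 ->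
  Cm P Q0 -> Cm P Q -> Cm P (Q0 + s *: (Q - Q0)).
Proof.
move=> /andP [s0 s1] [[sQ0 pQ0] [Q0P tQ0]] [[sQ pQ] [QP tQ]].
have -> : Q0 + s *: (Q - Q0) = (1 - s) *: Q0 + s *: Q.
  by rewrite scalerBr scalerBl scale1r addrA addrC addrA [- _ + _]addrC.
split; [split|split].
- by rewrite /Defs.symmetricmx linearD /= !linearZ /= sQ0 sQ.
- move=> x; rewrite -/(qf _ x) qfD !qfZ; apply: addr_ge0; apply: mulr_ge0 => //.
  + by rewrite subr_ge0.
  + exact: pQ0.
  + exact: pQ.
- by rewrite mulmxDl -!scalemxAl Q0P QP !scaler0 addr0.
- by rewrite mxtraceD !mxtraceZ tQ0 tQ; ring.
Qed.

Lemma rank1_Cm n (P : 'M[R]_n) (z : 'cV[R]_n) : P^T = P -> P *m z = 0 ->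
  \sum_i z i 0 ^+ 2 != 0 ->
  Cm P ((n%:R / \sum_i z i 0 ^+ 2) *: (z *m z^T)) /\
  forall i, ((n%:R / \sum_i z i 0 ^+ 2) *: (z *m z^T)) i i
            = n%:R / (\sum_i z i 0 ^+ 2) * z i 0 ^+ 2.
Proof.
move=> sP Pz S0.
set S := \sum_i z i 0 ^+ 2 in S0 *.
have Sge : 0 <= S by apply: sumr_ge0 => i _; exact: sqr_ge0.
have Sgt : 0 < S by rewrite lt_def S0.
split; last by move=> i; rewrite !mxE big_ord1 !mxE expr2.
split; [split|split].
- by rewrite /Defs.symmetricmx linearZ /= trmx_mul trmxK.
- move=> x; rewrite -/(qf _ x) qfZ qf_rank1 mulr_ge0 ?sqr_ge0 //.
  by rewrite divr_ge0 ?ler0n.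
- by rewrite -scalemxAl -mulmxA -(trmxK P) -trmx_mul sP Pz trmx0 mulmx0 scaler0.
- rewrite mxtraceZ mxtrace_mulC trace_mx11 mxE.
  have -> : \sum_j z^T 0 j * z j 0 = S by apply: eq_bigr => i _; rewrite mxE expr2.
  by field; rewrite gt_eqF.
Qed.

Lemma Cm_bound n (P Q : 'M[R]_n) i j : Cm P Q -> `|Q i j| <= n%:R.
Proof.
move=> [pQ [_ tQ]].
have dge : forall k, 0 <= Q k k by move=> k; apply: psd_diag.
have dle : forall k, Q k k <= n%:R.
  move=> k; rewrite -tQ /mxtrace (bigD1 k) //= lerDl.
  by apply: sumr_ge0 => l _; apply: dge.
have key : forall s : R, s ^+ 2 = 1 -> 0 <= Q j j + s *+ 2 * Q i j + Q i i.
  move=> s s1.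
  have := psd_ge0 (ev R j + s *: ev R i) pQ.
  rewrite qf_add ?psd_sym // !qf_e s1 mul1r.
  have -> : ((ev R i)^T *m Q *m ev R j) 0 0 = Q i j by rewrite /ev -colE mxE eTM.
  by [].

have h1 := key 1 (expr1n _ _).
have h2 : 0 <= Q j j + (-1) *+ 2 * Q i j + Q i i by apply: key; rewrite sqrrN expr1n.
have := dle i; have := dle j; have := dge i; have := dge j.
rewrite ler_norml; move: h1 h2; rewrite !mulr2n; lra.
Qed.


Lemma closed_all_ge {T : topologicalType} (I : Type) (F : I -> T -> R) :
  (forall i, continuous (F i)) -> closed [set x | forall i, 0 <= F i x].
Proof.
move=> hF.
have -> : [set x | forall i, 0 <= F i x] =
    \bigcap_(i in [set: I]) (F i @^-1` [set r : R | 0 <= r]).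
  by apply/seteqP; split => x /= h i; [move=> _|]; apply: h.
apply: closed_bigI => i _; apply: preimage_closed; last exact: closed_ge.
by move=> x _; apply: hF.
Qed.

Lemma closed_all_eq {T : topologicalType} (I : Type) (F : I -> T -> R) :
  (forall i, continuous (F i)) -> closed [set x | forall i, F i x = 0].
Proof.
move=> hF.
have -> : [set x | forall i, F i x = 0] =
    \bigcap_(i in [set: I]) (F i @^-1` [set r : R | r = 0]).
  by apply/seteqP; split => x /= h i; [move=> _|]; apply: h.
apply: closed_bigI => i _; apply: preimage_closed; last exact: closed_eq.
by move=> x _; apply: hF.
Qed.

Lemma cont_cst {T : topologicalType} (c : R) : continuous (fun _ : T => c).
Proof. exact: cst_continuous. Qed.

Lemma cont_add {T : topologicalType} (f g : T -> R) :
  continuous f -> continuous g -> continuous (fun x => f x + g x).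
Proof. by move=> hf hg x; apply: cvgD; [exact: hf | exact: hg]. Qed.

Lemma cont_mul {T : topologicalType} (f g : T -> R) :
  continuous f -> continuous g -> continuous (fun x => f x * g x).
Proof. by move=> hf hg x; apply: cvgM; [exact: hf | exact: hg]. Qed.

Lemma cont_opp {T : topologicalType} (f : T -> R) :
  continuous f -> continuous (fun x => - f x).
Proof. by move=> hf x; apply: cvgN; exact: hf. Qed.


Lemma cont_qf n (x : 'cV[R]_n) :
  continuous (fun v : 'rV[R]_(n * n) => qf (vec_mx v) x).
Proof.
under eq_fun do rewrite qfE.
apply: cont_sum => i; apply: cont_sum => j.
apply: cont_mul; last exact: cont_cst.
apply: cont_mul; first exact: cont_cst.
exact: cont_coord.
Qed.

Lemma cont_mulP n (P : 'M[R]_n) i j :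
  continuous (fun v : 'rV[R]_(n * n) => (vec_mx v *m P) i j).
Proof.
under eq_fun do rewrite mxE.
apply: cont_sum => k; apply: cont_mul; [exact: cont_coord | exact: cont_cst].
Qed.

Lemma cont_tr n (c : R) :
  continuous (fun v : 'rV[R]_(n * n) => \tr (vec_mx v) - c).
Proof.
apply: cont_add; last exact: cont_cst.
by apply: cont_sum => k; exact: cont_coord.
Qed.

Lemma cont_f n :
  continuous (fun v : 'rV[R]_(n * n) => \sum_i (vec_mx v i i - 1) ^+ 2).
Proof.
apply: cont_sum => i; under eq_fun do rewrite expr2.
by apply: cont_mul; apply: cont_add; (exact: cont_coord || exact: cont_cst).
Qed.

Lemma closed_A n (P : 'M[R]_n) :
  closed [set v : 'rV[R]_(n * n) | Cm P (vec_mx v)].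
Proof.
have -> : [set v : 'rV[R]_(n * n) | Cm P (vec_mx v)] =
   [set v | forall ij : 'I_n * 'I_n, vec_mx v ij.1 ij.2 - vec_mx v ij.2 ij.1 = 0] `&`
   [set v | forall x : 'cV[R]_n, 0 <= qf (vec_mx v) x] `&`
   [set v | forall ij : 'I_n * 'I_n, (vec_mx v *m P) ij.1 ij.2 = 0] `&`
   [set v | forall u : unit, \tr (vec_mx v) - n%:R = 0].
  apply/seteqP; split => v /=.
    move=> [[sQ pQ] [QP tQ]]; split; [split; [split|]|].
    - move=> [i j] /=; apply/eqP; rewrite subr_eq0; apply/eqP.
      by have := congr1 (fun M : 'M[R]_n => M j i) sQ; rewrite [in LHS]mxE.
    - exact: pQ.
    - by move=> [i j]; rewrite QP mxE.
    - by move=> _; rewrite tQ subrr.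
  move=> [[[sQ pQ] QP] tQ]; split; [split|split].
  - apply/matrixP => i j; rewrite mxE; apply/eqP; rewrite -subr_eq0; apply/eqP.
    exact: (sQ (j, i)).
  - exact: pQ.
  - by apply/matrixP => i j; rewrite (QP (i, j)) mxE.
  - by apply/eqP; rewrite -subr_eq0; apply/eqP; exact: (tQ tt).
apply: closedI; first apply: closedI; first apply: closedI.
- apply: closed_all_eq => -[i j] /=.
  by apply: cont_add; [exact: cont_coord | apply: cont_opp; exact: cont_coord].
- by apply: closed_all_ge => x; exact: cont_qf.
- by apply: closed_all_eq => -[i j]; exact: cont_mulP.
- by apply: closed_all_eq => _; exact: cont_tr.
Qed.

Lemma bounded_A n (P : 'M[R]_n) :
  bounded_set [set v : 'rV[R]_(n * n) | Cm P (vec_mx v)].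
Proof.
rewrite /bounded_near.
apply: filterS (nbhs_pinfty_ge (num_real (n%:R : R))) => M hM v Av.
apply: le_trans hM.
rewrite [X in X <= _]/Num.norm /= mx_normrE.
apply: bigmax_le => [|[a k] _] /=; first exact: ler0n.
rewrite (ord1 a); case/mxvec_indexP: k => i j.
by have := Cm_bound i j Av; rewrite mxE.
Qed.


Lemma small_s (a b : R) : 0 <= b ->
  (forall s, 0 < s -> s <= 1 -> 0 <= s *+ 2 * a + s ^+ 2 * b) -> 0 <= a.
Proof.
move=> b0 h; rewrite leNgt; apply/negP => a0.
have d0 : 0 < b - a by lra.
set s := - a / (b - a).
have s0 : 0 < s by rewrite /s divr_gt0 //; lra.
have s1 : s <= 1 by rewrite /s ler_pdivrMr //; lra.
have := h s s0 s1.
have e : s * (b - a) = - a by rewrite /s mulrAC -mulrA divff ?mulr1 // gt_eqF.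
have : s * b = - a + s * a by rewrite -e; ring.
move=> e2 h2.
have e5 : s ^+ 2 * b = s * (- a + s * a) by rewrite -e2; ring.
rewrite e5 mulr2n in h2.
have sa : s * a < 0 by rewrite pmulr_rlt0.
nra.
Qed.

Lemma sep n (P : 'M[R]_n) : P^T = P -> Hcond P ->
  exists Q : 'M[R]_n, correlationmx Q /\ Q *m P = 0.
Proof.
move=> sP hH.
case: (posnP n) => [n0|n_gt0].
  subst n; exists 0; split; last by rewrite mul0mx.
  split; last by case.
  split; first by rewrite /Defs.symmetricmx trmx0.
  by move=> x; rewrite -/(qf _ x) qfE big_ord0.
have nR : 0 < n%:R :> R by rewrite ltr0n.
case: (pselect (exists z : 'cV[R]_n, P *m z = 0 /\ \sum_i z i 0 ^+ 2 != 0)) =>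
  [[z0 [Pz0 S0]]|nz]; last first.
  exfalso.
  have := hH (const_mx (-1)).
  have -> : \sum_i (const_mx (-1) : 'rV[R]_n) 0 i = - n%:R.
    by under eq_bigr do rewrite mxE; rewrite sumr_const card_ord -mulNrn.
  move=> h; have := h _; rewrite oppr_ge0 leNgt nR => /(_ _)/notF; apply.
  move=> z Pz.
  have S0 : \sum_i z i 0 ^+ 2 = 0.
    by apply/eqP; apply: contrapT => hS; apply: nz; exists z; split => //; exact/negP.
  under eq_bigr do rewrite mxE mulN1r.
  by rewrite sumrN S0 oppr0.
set A := [set v : 'rV[R]_(n * n) | Cm P (vec_mx v)].
set f := fun v : 'rV[R]_(n * n) => \sum_i (vec_mx v i i - 1) ^+ 2.
have [Cz dz] := rank1_Cm sP Pz0 S0.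
have A0 : A !=set0 by exists (mxvec ((n%:R / \sum_i z0 i 0 ^+ 2) *: (z0 *m z0^T))); rewrite /A /= mxvecK; exact: Cz.
have cA : compact A by apply: bounded_closed_compact; [exact: bounded_A | exact: closed_A].
have cf : {within A, continuous f} by apply: continuous_subspaceT; exact: cont_f.
have [c cA' cmin] := EVT_min_rV A0 cA cf.
have CQ0 : Cm P (vec_mx c) by move: cA'; rewrite inE.
set Q0 := vec_mx c in CQ0.
set w := fun i => Q0 i i - 1.
have VI : forall Q, Cm P Q -> 0 <= \sum_i w i * (Q i i - Q0 i i).
  move=> Q CQ.
  apply: (small_s (b := \sum_i (Q i i - Q0 i i) ^+ 2)).
    by apply: sumr_ge0 => i _; exact: sqr_ge0.
  move=> s s0 s1.
  have Cs := Cm_conv (s := s) (Q0 := Q0) _ CQ0 CQ.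
  have := cmin (mxvec (Q0 + s *: (Q - Q0))).
  rewrite inE /A /= mxvecK => /(_ (Cs _)).
  rewrite (ltW s0) s1 => /(_ isT).
  rewrite /f mxvecK -/Q0 -subr_ge0 -sumrB mulr_sumr mulr_sumr -big_split /=.
  move=> h; apply: le_trans h _; rewrite le_eqVlt; apply/orP; left; apply/eqP.
  apply: eq_bigr => i _; rewrite /w /Q0 !mxE; ring.
set beta := \sum_i Q0 i i * w i.
set d : 'rV[R]_n := \row_i (w i - beta / n%:R).
have hd : forall z : 'cV[R]_n, P *m z = 0 -> 0 <= \sum_i d 0 i * z i 0 ^+ 2.
  move=> z Pz.
  have [S0'|S0'] := eqVneq (\sum_i z i 0 ^+ 2) 0.
    rewrite big1 // => i _.
    have : z i 0 ^+ 2 = 0.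
      apply: (@psumr_eq0P _ _ predT (fun k => z k 0 ^+ 2)) => //.
      by move=> k _; exact: sqr_ge0.
    by move=> ->; rewrite mulr0.
  have [Cz' dz'] := rank1_Cm sP Pz S0'.
  have h := VI _ Cz'.
  set S := \sum_i z i 0 ^+ 2 in S0' h dz'.
  have Sgt : 0 < S by rewrite lt_def S0' sumr_ge0 // => i _; exact: sqr_ge0.
  have h' : 0 <= \sum_i w i * (n%:R / S * z i 0 ^+ 2 - Q0 i i).
    by apply: le_trans h _; rewrite le_eqVlt; apply/orP; left; apply/eqP; apply: eq_bigr => i _; rewrite dz'.
  have e1 : \sum_i d 0 i * z i 0 ^+ 2 = \sum_i w i * z i 0 ^+ 2 - beta / n%:R * S.
    by rewrite /S mulr_sumr -sumrB; apply: eq_bigr => i _; rewrite mxE; ring.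
  have e2 : \sum_i w i * (n%:R / S * z i 0 ^+ 2 - Q0 i i) =
      n%:R / S * \sum_i w i * z i 0 ^+ 2 - beta.
    by rewrite /beta mulr_sumr -sumrB; apply: eq_bigr => i _; ring.
  rewrite e2 in h'; rewrite e1.
  have := mulr_ge0 (divr_ge0 (ltW Sgt) (ltW nR)) h'.
  have -> : S / n%:R * (n%:R / S * \sum_i w i * z i 0 ^+ 2 - beta) =
      \sum_i w i * z i 0 ^+ 2 - beta / n%:R * S.
    by field; rewrite !gt_eqF.
  by [].
have := hH d hd.
have -> : \sum_i d 0 i = - \sum_i w i ^+ 2.
  rewrite (eq_bigr (fun i => w i - beta / n%:R)); last by move=> i _; rewrite mxE.
  rewrite sumrB sumr_const card_ord -[_ *+ n]mulr_natr divfK ?gt_eqF //.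
  by rewrite /beta -sumrB -sumrN; apply: eq_bigr => i _; rewrite /w; ring.
rewrite oppr_ge0 => hw.
have w0 : forall i, w i = 0.
  move=> i; apply/eqP; rewrite -sqrf_eq0; apply/eqP.
  apply: (@psumr_eq0P _ _ predT (fun k => w k ^+ 2)) => //.
    by move=> k _; exact: sqr_ge0.
  by apply/eqP; rewrite eq_le hw sumr_ge0 // => k _; exact: sqr_ge0.
exists Q0; split; last by case: CQ0 => _ [].
split; first by case: CQ0.
by move=> i; have := w0 i; rewrite /w => /eqP; rewrite subr_eq0 => /eqP.
Qed.

End Sep.

Lemma recov_real (R : realType) m n (U : 'M[R]_(m, n)) :
  recoverable U -> realizable U.
Proof.
move=> rec.
have [P [sP iP eP]] := proj_exists U.
have hH := recov_H sP iP eP rec.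
have [Q [cQ QP]] := sep sP hH.
exists Q; split => //.
have /submxP [Y ->] : (U <= P)%MS by case/andP: eP.
by rewrite trmx_mul sP mulmxA QP mul0mx.
Qed.

Theorem proposition3p1 (R : realType) (m n : nat) (U : 'M[R]_(m, n)) :
  (recoverable U <-> realizable U) /\
  (realizable U <-> ellipsoid_fitting (orth_compl U)).
Proof.
split; split.
- exact: recov_real.
- exact: real_recov.
- exact: real_ell.
- exact: ell_real.
Qed.
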